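(* Let $d\ge 2$ be even and let $\mathcal{D}$ be the distribution on $\mathbb{R}^d\times\{\pm1\}$ given by: $y\in\{+1,-1\}$ with probability $1/2$ each, an index $j^*$ chosen uniformly at random from $\{1,\dots,d/2\}$, and $x=y\,e_{j^*}$, where $e_i$ denotes the $i$-th standard basis vector of $\mathbb{R}^d$; write $j^*(x)$ for this index. Define the probability distribution $$\tilde\nu=\frac{1}{d}\sum_{i=1}^{d/2}\left(\delta_{\theta_i}+\delta_{\theta'_i}\right)$$ on $\mathbb{R}\times\mathbb{R}^d\times\mathbb{R}$, where $\theta_i=\left(\frac{1}{\sqrt2},\frac{3}{\sqrt{20}}e_i,\frac{-1}{\sqrt{20}}\right)$ and $\theta'_i=\left(\frac{-1}{\sqrt2},\frac{-3}{\sqrt{20}}e_i,\frac{-1}{\sqrt{20}}\right)$. Then for every $(x,y)$ in the support of $\mathcal{D}$, $\nabla_x\mathcal{L}(\tilde\nu,(x,y)) = c\cdot e_{j^*(x)}$ for some constant $c\neq 0$.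
   Context: For a probability distribution $\nu$ over parameters $(w,r,b)\in\mathbb{R}\times\mathbb{R}^d\times\mathbb{R}$, the network output is $f(\nu,x)=\mathbb{E}_{(w,r,b)\sim\nu}[w\,\phi(\langle r,x\rangle+b)]$ with $\phi(t)=\max(t,0)$, and the cross-entropy loss is $\mathcal{L}(\nu,(x,y))=\log(1+\exp(-y f(\nu,x)))$. $\delta_\theta$ is the point mass at $\theta$, and $\nabla_x\mathcal{L}$ is the gradient of the loss with respect to the input $x$. *)

(* Defs.v *)
From HB Require Import structures.
From mathcomp Require Import all_boot all_order all_algebra.
From mathcomp Require Import all_classical all_reals all_analysis.
Set Implicit Arguments. Unset Strict Implicit. Unset Printing Implicit Defensive.
Import Order.TTheory GRing.Theory Num.Theory.
Import numFieldNormedType.Exports.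
Local Open Scope ring_scope.

Section Defs.
Variables (R : realType) (d : nat).

Definition relu (t : R) : R := Num.max t 0.

Definition ebasis (k : 'I_d) : 'rV[R]_d := delta_mx 0 k.

Definition inner (u v : 'rV[R]_d) : R := \sum_(k < d) u 0 k * v 0 k.

Definition param := (R * 'rV[R]_d * R)%type.

(* a finitely supported probability distribution over parameters, given as a
   list of (weight, atom) pairs; E_nu[g] = \sum weight * g atom *)
Definition fdist := seq (R * param).

Definition unit_neuron (th : param) (x : 'rV[R]_d) : R :=
  th.1.1 * relu (inner th.1.2 x + th.2).

Definition netout (nu : fdist) (x : 'rV[R]_d) : R :=
  \sum_(p <- nu) p.1 * unit_neuron p.2 x.

Definition ce_loss (nu : fdist) (x : 'rV[R]_d) (y : R) : R :=
  ln (1 + expR (- (y * netout nu x))).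

Definition gradient (f : 'rV[R]_d -> R) (x : 'rV[R]_d) : 'rV[R]_d :=
  \row_k ('d f x) (ebasis k).

Definition theta (i : 'I_d) : param :=
  (1 / Num.sqrt 2, (3 / Num.sqrt 20) *: ebasis i, -1 / Num.sqrt 20).
Definition theta' (i : 'I_d) : param :=
  (-1 / Num.sqrt 2, (-3 / Num.sqrt 20) *: ebasis i, -1 / Num.sqrt 20).

(* the indices {1,...,d/2}, i.e. 0-based ordinals i < d/2 *)
Definition half_idx : seq 'I_d := [seq i <- enum 'I_d | (nat_of_ord i < d./2)%N].

Definition nu_tilde : fdist :=
  flatten [seq [:: (1 / d%:R, theta i); (1 / d%:R, theta' i)] | i <- half_idx].

End Defs.

(* Main.v *)
Require Import Defs.
From HB Require Import structures.
From mathcomp Require Import all_boot all_order all_algebra.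
From mathcomp Require Import all_classical all_reals all_analysis.
Import Order.TTheory GRing.Theory Num.Theory.
Import numFieldNormedType.Exports.
Local Open Scope ring_scope.

From mathcomp Require Import ring lra.
Lemma near_eq_diff (R : realType) (V W : normedModType R) (f g : V -> W) (x : V) :
  (\forall z \near x, f z = g z) -> differentiable g x ->
  differentiable f x /\ 'd f x = 'd g x :> (V -> W).
Proof.
move=> fg dg.
pose h := fun z => f z - g z.
have hx : h x = 0.
  by rewrite /h (nbhs_singleton fg) subrr.
have hd : 'd h x = (\0 : {linear V -> W}) :> (V -> W).
  apply: diff_unique; first exact: cst_continuous.
  apply/eqaddoP => _/posnumP[e].
  rewrite (near_shift 0) in fg.
  near=> t => /=.
  rewrite hx addr0 subr0 /h /= .
  have -> : f (t + x) = g (t + x).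
    by near: t; apply: filterS fg => z /=; rewrite subr0 addrC.
  by rewrite subrr normr0 mulr_ge0.
have dh : differentiable h x.
  apply/diff_locallyP; rewrite hd; split; first exact: cst_continuous.
  apply/eqaddoP => _/posnumP[e].
  rewrite (near_shift 0) in fg.
  near=> t => /=.
  rewrite hx addr0 subr0 /h /= .
  have -> : f (t + x) = g (t + x).
    by near: t; apply: filterS fg => z /=; rewrite subr0 addrC.
  by rewrite subrr normr0 mulr_ge0.
have -> : f = g + h by apply/funext => z; rewrite /h /= addrC subrK.
split; first exact: differentiableD.
rewrite diffD // hd; by apply/funext => z /=; rewrite addr0.
Unshelve. all: by end_near. Qed.

Section H.
Variables (R : realType) (d : nat).

Lemma inner_e (i : 'I_d) (c : R) (z : 'rV[R]_d) : inner (c *: ebasis R i) z = c * z 0 i.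
Proof.
rewrite /inner (bigD1 i) //= big1 => [|k ki].
  by rewrite /ebasis !mxE !eqxx /= mulr1 addr0.
by rewrite /ebasis !mxE /= (negbTE ki) mulr0 mul0r.
Qed.

Lemma netout_sum z : netout (nu_tilde R d) z =
  \sum_(i <- half_idx d) (1 / d%:R * unit_neuron (theta R i) z + 1 / d%:R * unit_neuron (theta' R i) z).
Proof.
rewrite /netout /nu_tilde big_flatten /= big_map; apply: eq_bigr => i _.
by rewrite !big_cons big_nil addr0.
Qed.

Lemma relu0 (t : R) : t <= 0 -> relu t = 0.
Proof. by move=> h; rewrite /relu; apply/max_idPr. Qed.
Lemma reluid (t : R) : 0 <= t -> relu t = t.
Proof. by move=> h; rewrite /relu; apply/max_idPl. Qed.

Lemma coordL (j : 'I_d) : {linear 'rV[R]_d -> R}.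
Proof.
by exists (fun N : 'rV[R]_d => N 0 j); do 2![eexists]; do ?[constructor];
     rewrite ?mxE// => ? *; rewrite ?mxE//; move=> ?; rewrite !mxE.
Defined.


Lemma pre_neg (c z : R) : `|z| < 1/4 -> (c = 3 \/ c = -3) ->
  c / Num.sqrt 20 * z + -1 / Num.sqrt 20 <= 0.
Proof.
move=> hz hc.
have -> : c / Num.sqrt 20 * z + -1 / Num.sqrt 20 = (c * z - 1) * (Num.sqrt 20)^-1 by ring.
apply: mulr_le0_ge0; last by rewrite invr_ge0 sqrtr_ge0.
move: hz; rewrite ltr_norml => /andP[h1 h2].
case: hc => ->; lra.
Qed.

Lemma netout_loc (y : R) (hy : y = 1 \/ y = -1) (j : 'I_d) (hj : (j < d./2)%N)
  (z : 'rV[R]_d) : (forall k, `|z 0 k - (y *: ebasis R j) 0 k| < 1/4) ->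
  netout (nu_tilde R d) z =
    1 / d%:R * (1 / Num.sqrt 2) / Num.sqrt 20 * (3 * z 0 j - y).
Proof.
move=> hz.
have jin : j \in half_idx d by rewrite /half_idx mem_filter hj mem_enum.
have un : uniq (half_idx d) by rewrite /half_idx filter_uniq // enum_uniq.
rewrite netout_sum (bigD1_seq j) //= big1_seq => [|i /andP[ij _]]; last first.
  have hzi : `|z 0 i| < 1/4.
    move: (hz i); rewrite /ebasis !mxE /=; case: eqP ij => [-> /eqP//|_ _].
    by rewrite mulr0 subr0.
  rewrite /unit_neuron /=; rewrite !inner_e !relu0 ?mulr0 ?addr0 //; apply: pre_neg => //; by [left|right].
rewrite /unit_neuron /= !inner_e addr0.
move: (hz j); rewrite /ebasis !mxE !eqxx /= mulr1 ltr_distl => /andP[h1 h2].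
have s0 : 0 < Num.sqrt (20:R) by rewrite sqrtr_gt0; lra.
case: hy => hy; subst y.
- rewrite reluid; last first.
    have -> : 3 / Num.sqrt 20 * z 0 j + -1 / Num.sqrt 20 = (3 * z 0 j - 1) * (Num.sqrt 20)^-1 by ring.
    apply: mulr_ge0; [lra | by rewrite invr_ge0 ltW].
  rewrite relu0; last first.
    have -> : -3 / Num.sqrt 20 * z 0 j + -1 / Num.sqrt 20 = (-3 * z 0 j - 1) * (Num.sqrt 20)^-1 by ring.
    apply: mulr_le0_ge0; [lra | by rewrite invr_ge0 ltW].
  ring.
- rewrite relu0; last first.
    have -> : 3 / Num.sqrt 20 * z 0 j + -1 / Num.sqrt 20 = (3 * z 0 j - 1) * (Num.sqrt 20)^-1 by ring.
    apply: mulr_le0_ge0; [lra | by rewrite invr_ge0 ltW].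
  rewrite reluid; last first.
    have -> : -3 / Num.sqrt 20 * z 0 j + -1 / Num.sqrt 20 = (-3 * z 0 j - 1) * (Num.sqrt 20)^-1 by ring.
    apply: mulr_ge0; [lra | by rewrite invr_ge0 ltW].
  ring.
Qed.

End H.

Lemma hp (R : realType) (u : R) : 0 < 1 + expR u.
Proof. by apply: addr_gt0 => //; exact: expR_gt0. Qed.
Lemma hp2 (R : realType) (u : R) : (1 + expR u)^-1 != 0.
Proof. by rewrite invr_eq0 gt_eqF // hp. Qed.
Lemma hp3 (R : realType) (u : R) : 0 + expR u != 0.
Proof. by rewrite add0r gt_eqF // expR_gt0. Qed.

Theorem mainTheorem2 (R : realType) (d : nat) (hd2 : (2 <= d)%N) (hdeven : ~~ odd d)
  (y : R) (hy : y = 1 \/ y = -1) (j : 'I_d) (hj : (j < d./2)%N) :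
  let x := y *: ebasis R j in
  exists c : R, c != 0 /\
    differentiable (fun z : 'rV[R]_d => ce_loss (nu_tilde R d) z y) x /\
    gradient (fun z : 'rV[R]_d => ce_loss (nu_tilde R d) z y) x = c *: ebasis R j.
Proof.
move=> x.
set K : R := 1 / d%:R * (1 / Num.sqrt 2) / Num.sqrt 20.
have K0 : K != 0.
  have d0 : (0 : R) < d%:R by rewrite ltr0n; case: d hd2 {hdeven hj j x K}.
  rewrite /K !mul1r; apply/mulf_neq0; [apply/mulf_neq0|]; rewrite invr_eq0 gt_eqF // ?sqrtr_gt0 //; lra.
have y0 : y != 0 by case: hy => ->; rewrite ?oppr_eq0 oner_eq0.
set a := - (y * K * 3).
set b := y * K * y.
have a0 : a != 0.
  rewrite oppr_eq0 (mulf_neq0 (mulf_neq0 y0 K0)) //; apply: lt0r_neq0; lra.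
pose G := (@ln R) \o ((cst 1 + expR) \o (fun u : R => a * u + b)).
have dG (t : R) : is_derive t (1 : R) G
    ((1 + expR (a * t + b))^-1 * ((0 + expR (a * t + b)) * a)).
  apply: is_derive1_comp; last apply: is_derive1_comp.
  - apply: is_derive1_ln => /=.
    have -> : (cst 1 + expR) (a*t+b) = 1 + expR (a*t+b) by [].
    by apply: (lt_le_trans ltr01); rewrite lerDl expR_ge0.
  - have -> : (fun u : R => a * u + b) = a \*: id + cst b by apply/funext => u.
    rewrite -[X in is_derive _ _ _ X]addr0.
    apply: is_deriveD; rewrite -[X in is_derive _ _ _ X]mulr1; exact: is_deriveZ.
have Gd (t : R) : differentiable G t by apply/derivable1_diffP; by case: (dG t).
set F := fun z : 'rV[R]_d => ce_loss (nu_tilde R d) z y.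
have hnear : \forall z \near x, F z = (G \o @coordL R d j) z.
  have := nbhsx_ballx x (1/4 : R) ltac:(lra).
  apply: filterS => z [_ B].
  rewrite /F /ce_loss (@netout_loc R d y hy j hj) => [|k]; last first.
    by have := B 0 k; rewrite /ball /= distrC.
  by rewrite /G /= /cst /=; congr (ln (1 + expR _)); rewrite /a /b /K; ring.
have dcl : differentiable (@coordL R d j) x.
  by apply: linear_differentiable; exact: coord_continuous.
have dF : differentiable (G \o @coordL R d j) x by apply: differentiable_comp.
have [dFx dFe] := @near_eq_diff R _ _ _ _ _ hnear dF.
set t := @coordL R d j x.
exists ('d G t 1); split.
  have E : 'D_1 G t = 'd G t 1 by apply: deriveE.
  rewrite -E. 
  have [_ ->] := dG t.
  apply: mulf_neq0; last apply: mulf_neq0.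
  - exact: hp2.
  - exact: hp3.
  - exact: a0.
split; first exact: dFx.
apply/rowP => k; rewrite /gradient !mxE dFe.
rewrite (diff_comp dcl (Gd t)) /=.
have cc : continuous (@coordL R d j) by exact: coord_continuous.
rewrite (diff_lin x cc).
have lin r : 'd G t r = r * 'd G t 1.
  by rewrite -{1}(mulr1 r) -[r * 1]/(r *: 1) linearZ.
rewrite lin /= /ebasis !mxE /= mulrC; congr (_ * _%:R).
by rewrite eq_sym.
Qed.
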